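(* Let $S$ be a closed densely defined symmetric operator in a separable Hilbert space $\mathfrak H$ with equal nonzero defect numbers. Then $S$ is a Phillips symmetric operator if and only if $\mathfrak N_\lambda\perp\mathfrak N_\nu$ for every $\lambda\in\mathbb C_+$ and every $\nu\in\mathbb C_-$.
   Context: $\mathfrak N_\lambda=\ker(S^*-\lambda I)$ are the defect subspaces of $S$. A boundary triplet of $S^*$ is $(\mathcal H,\Gamma_-,\Gamma_+)$ with $\Gamma_\pm:\mathcal D(S^* )\to\mathcal H$ linear, $(S^*f,g)-(f,S^*g)=i[(\Gamma_+f,\Gamma_+g)-(\Gamma_-f,\Gamma_-g)]$, and $(\Gamma_-,\Gamma_+)$ surjective onto $\mathcal H\oplus\mathcal H$. For $\lambda\in\mathbb C_+$ the characteristic function $\Theta(\lambda)$ is the bounded operator in $\mathcal H$ with $\mathcal D(S)\dotplus\mathfrak N_\lambda=\{f\in\mathcal D(S^* ):\Theta(\lambda)\Gamma_+f=\Gamma_-f\}$. $S$ is a Phillips symmetric operator (PSO) if its characteristic function is constant on $\mathbb C_+$ (independent of the triplet). *)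

(* Defs.v *)
From Stdlib Require Import Reals.
Open Scope R_scope.

Record C := mkC { Re : R ; Im : R }.
Definition C0 : C := mkC 0 0.
Definition C1 : C := mkC 1 0.
Definition Ci : C := mkC 0 1.
Definition Cadd (a b : C) : C := mkC (Re a + Re b) (Im a + Im b).
Definition Copp (a : C) : C := mkC (- Re a) (- Im a).
Definition Csub (a b : C) : C := Cadd a (Copp b).
Definition Cmul (a b : C) : C :=
  mkC (Re a * Re b - Im a * Im b) (Re a * Im b + Im a * Re b).
Definition Cconj (a : C) : C := mkC (Re a) (- Im a).

(* ---------- complex Hilbert spaces ----------
   inner product linear in the first argument, antilinear in the second *)
Record Hilbert := {
  hcar :> Type;
  h0 : hcar;
  hadd : hcar -> hcar -> hcar;
  hopp : hcar -> hcar;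
  hscal : C -> hcar -> hcar;
  hinner : hcar -> hcar -> C;
  haddA : forall x y z, hadd x (hadd y z) = hadd (hadd x y) z;
  haddC : forall x y, hadd x y = hadd y x;
  hadd0 : forall x, hadd x h0 = x;
  haddN : forall x, hadd x (hopp x) = h0;
  hscalA : forall a b x, hscal a (hscal b x) = hscal (Cmul a b) x;
  hscal1 : forall x, hscal C1 x = x;
  hscalDr : forall a x y, hscal a (hadd x y) = hadd (hscal a x) (hscal a y);
  hscalDl : forall a b x, hscal (Cadd a b) x = hadd (hscal a x) (hscal b x);
  hinnerDl : forall x y z, hinner (hadd x y) z = Cadd (hinner x z) (hinner y z);
  hinnerZl : forall a x y, hinner (hscal a x) y = Cmul a (hinner x y);
  hinnerC : forall x y, hinner y x = Cconj (hinner x y);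
  hinner_ge0 : forall x, 0 <= Re (hinner x x);
  hinner_eq0 : forall x, hinner x x = C0 -> x = h0;
  hcomplete : forall u : nat -> hcar,
    (forall eps, 0 < eps -> exists N, forall m n, (N <= m)%nat -> (N <= n)%nat ->
        sqrt (Re (hinner (hadd (u m) (hopp (u n))) (hadd (u m) (hopp (u n))))) < eps) ->
    exists l, forall eps, 0 < eps -> exists N, forall n, (N <= n)%nat ->
        sqrt (Re (hinner (hadd (u n) (hopp l)) (hadd (u n) (hopp l)))) < eps
}.

Arguments h0 {h}.
Arguments hadd {h}.
Arguments hopp {h}.
Arguments hscal {h}.
Arguments hinner {h}.

Definition hsub {H : Hilbert} (x y : H) : H := hadd x (hopp y).
Definition hnorm {H : Hilbert} (x : H) : R := sqrt (Re (hinner x x)).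

Definition separable (H : Hilbert) : Prop :=
  exists d : nat -> H, forall x eps, 0 < eps -> exists n, hnorm (hsub x (d n)) < eps.

Definition converges {H : Hilbert} (u : nat -> H) (l : H) : Prop :=
  forall eps, 0 < eps -> exists N, forall n, (N <= n)%nat -> hnorm (hsub (u n) l) < eps.

(* ---------- (unbounded) linear operators: a domain D and an action T ---------- *)
Definition subspace {H : Hilbert} (D : H -> Prop) : Prop :=
  D h0 /\ (forall x y, D x -> D y -> D (hadd x y)) /\
  (forall a x, D x -> D (hscal a x)).

Definition linear_on {H K : Hilbert} (D : H -> Prop) (T : H -> K) : Prop :=
  forall a b x y, D x -> D y ->
    T (hadd (hscal a x) (hscal b y)) = hadd (hscal a (T x)) (hscal b (T y)).

Definition densely_defined {H : Hilbert} (D : H -> Prop) : Prop :=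
  forall x eps, 0 < eps -> exists y, D y /\ hnorm (hsub x y) < eps.

Definition is_adjoint {H : Hilbert} (D : H -> Prop) (T : H -> H)
  (Ds : H -> Prop) (Ts : H -> H) : Prop :=
  (forall g, Ds g <-> exists h, forall f, D f -> hinner (T f) g = hinner f h) /\
  (forall g f, Ds g -> D f -> hinner (T f) g = hinner f (Ts g)).

Definition symmetric {H : Hilbert} (D : H -> Prop) (T : H -> H) : Prop :=
  forall f g, D f -> D g -> hinner (T f) g = hinner f (T g).

Definition closed_op {H : Hilbert} (D : H -> Prop) (T : H -> H) : Prop :=
  forall (u : nat -> H) f g, (forall n, D (u n)) -> converges u f ->
    converges (fun n => T (u n)) g -> D f /\ T f = g.

Definition defect {H : Hilbert} (Ds : H -> Prop) (Ts : H -> H) (l : C) (x : H) : Prop :=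
  Ds x /\ Ts x = hscal l x.

(* two closed subspaces have the same Hilbert dimension: they are
   unitarily equivalent (isometric isomorphism between them) *)
Definition same_dim {H : Hilbert} (A B : H -> Prop) : Prop :=
  exists U : H -> H,
    (forall x, A x -> B (U x)) /\
    (forall y, B y -> exists x, A x /\ U x = y) /\
    linear_on A U /\
    (forall x y, A x -> A y -> hinner (U x) (U y) = hinner x y).

Definition nontrivial {H : Hilbert} (A : H -> Prop) : Prop :=
  exists x, A x /\ x <> h0.

Definition equal_nonzero_defect {H : Hilbert} (Ds : H -> Prop) (Ts : H -> H) : Prop :=
  same_dim (defect Ds Ts Ci) (defect Ds Ts (Copp Ci)) /\
  nontrivial (defect Ds Ts Ci).

Definition boundary_triplet {H : Hilbert} (Ds : H -> Prop) (Ts : H -> H)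
  (K : Hilbert) (Gm Gp : H -> K) : Prop :=
  linear_on Ds Gm /\ linear_on Ds Gp /\
  (forall f g, Ds f -> Ds g ->
     Csub (hinner (Ts f) g) (hinner f (Ts g)) =
     Cmul Ci (Csub (hinner (Gp f) (Gp g)) (hinner (Gm f) (Gm g)))) /\
  (forall a b : K, exists f, Ds f /\ Gm f = a /\ Gp f = b).

Definition bounded_linear {K : Hilbert} (A : K -> K) : Prop :=
  linear_on (fun _ => True) A /\
  exists M, forall x, hnorm (A x) <= M * hnorm x.

Definition char_function {H : Hilbert} (D : H -> Prop) (Ds : H -> Prop) (Ts : H -> H)
  (K : Hilbert) (Gm Gp : H -> K) (Theta : C -> K -> K) : Prop :=
  forall l, 0 < Im l ->
    bounded_linear (Theta l) /\
    forall f, (exists g h, D g /\ defect Ds Ts l h /\ f = hadd g h) <->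
              (Ds f /\ Theta l (Gp f) = Gm f).

Definition phillips {H : Hilbert} (D : H -> Prop) (Ds : H -> Prop) (Ts : H -> H) : Prop :=
  exists (K : Hilbert) (Gm Gp : H -> K) (Theta : C -> K -> K),
    boundary_triplet Ds Ts K Gm Gp /\ char_function D Ds Ts K Gm Gp Theta /\
    forall l m, 0 < Im l -> 0 < Im m -> forall x, Theta l x = Theta m x.

(* Main.v *)
From Stdlib Require Import Reals Lra Psatz Classical ClassicalEpsilon ProofIrrelevance.
Require Import Defs.
Open Scope R_scope.

Lemma Ceq : forall a b : C, Re a = Re b -> Im a = Im b -> a = b.
Proof. intros [a1 a2] [b1 b2]; simpl; intros -> ->; reflexivity. Qed.

Lemma Csplit : forall a b : C, a = b -> Re a = Re b /\ Im a = Im b.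
Proof. intros a b ->; auto. Qed.

Ltac cre := apply Ceq; simpl.

Section Hilb.
Variable H : Hilbert.
Implicit Types x y z u v g : H.

Lemma hinner0l y : hinner (@h0 H) y = C0.
Proof.
  assert (E := hinnerDl H h0 h0 y). rewrite hadd0 in E.
  apply Csplit in E; simpl in E; destruct E; cre; lra.
Qed.

Lemma hinnerNl x y : hinner (hopp x) y = Copp (hinner x y).
Proof.
  assert (E := hinnerDl H x (hopp x) y). rewrite haddN, hinner0l in E.
  apply Csplit in E; simpl in E; destruct E; cre; lra.
Qed.

Lemma hinnerDr x y z : hinner x (hadd y z) = Cadd (hinner x y) (hinner x z).
Proof.
  rewrite hinnerC, hinnerDl, (hinnerC H x y), (hinnerC H x z).
  cre; lra.
Qed.

Lemma hinnerZr a x y : hinner x (hscal a y) = Cmul (Cconj a) (hinner x y).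
Proof.
  rewrite hinnerC, hinnerZl, (hinnerC H x y). cre; ring.
Qed.

Lemma hinner0r x : hinner x (@h0 H) = C0.
Proof. rewrite hinnerC, hinner0l. cre; lra. Qed.

Lemma hinnerNr x y : hinner x (hopp y) = Copp (hinner x y).
Proof. rewrite hinnerC, hinnerNl, (hinnerC H x y). cre; lra. Qed.

Lemma hinner_self_Im x : Im (hinner x x) = 0.
Proof. assert (E := hinnerC H x x). apply Csplit in E; simpl in E; lra. Qed.

Lemma hsub_eq0 x y : hsub x y = h0 -> x = y.
Proof.
  unfold hsub; intro E.
  rewrite <- (hadd0 H x), <- (haddN H y), (haddC H y), haddA, E, haddC, hadd0.
  reflexivity.
Qed.

Lemma vec_ext_r u v : (forall g, hinner g u = hinner g v) -> u = v.
Proof.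
  intro E. apply hsub_eq0. apply hinner_eq0.
  unfold hsub at 2. rewrite hinnerDr, hinnerNr, E. cre; lra.
Qed.

Lemma vec_ext_l u v : (forall g, hinner u g = hinner v g) -> u = v.
Proof.
  intro E. apply vec_ext_r. intro g. rewrite (hinnerC H u g), (hinnerC H v g), E. reflexivity.
Qed.

End Hilb.

Ltac hexp := unfold hsub in *; repeat (rewrite ?hinnerDl, ?hinnerDr, ?hinnerZl, ?hinnerZr, ?hinnerNl, ?hinnerNr, ?hinner0l, ?hinner0r).
Ltac hexpH Hyp := unfold hsub in Hyp; repeat (rewrite ?hinnerDl, ?hinnerDr, ?hinnerZl, ?hinnerZr, ?hinnerNl, ?hinnerNr, ?hinner0l, ?hinner0r in Hyp).

Definition nsq {H : Hilbert} (x : H) := Re (hinner x x).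

Lemma inner_swap {H : Hilbert} (x y : H) : Re (hinner y x) = Re (hinner x y) /\ Im (hinner y x) = - Im (hinner x y).
Proof. rewrite (hinnerC H x y). simpl. lra. Qed.

Ltac swapf x y := let E := fresh in destruct (inner_swap x y) as [E ?]; try rewrite E in *.

Section CS.
Variable H : Hilbert.
Implicit Types x y z u v g : H.

Lemma nsq_ge0 x : 0 <= nsq x.
Proof. apply hinner_ge0. Qed.

Lemma nsq_eq0 x : nsq x = 0 -> x = h0.
Proof. intro E. apply hinner_eq0. apply Ceq; simpl. exact E. apply hinner_self_Im. Qed.

Lemma nsq_add x y : nsq (hadd x y) = nsq x + nsq y + 2 * Re (hinner x y).
Proof. unfold nsq. hexp. simpl. swapf x y. lra. Qed.

Lemma nsq_sub x y : nsq (hsub x y) = nsq x + nsq y - 2 * Re (hinner x y).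
Proof. unfold nsq. hexp. simpl. swapf x y. lra. Qed.

Lemma nsq_scal a x : nsq (hscal a x) = (Re a * Re a + Im a * Im a) * nsq x.
Proof. unfold nsq. hexp. simpl. rewrite (hinner_self_Im H x). ring. Qed.

Lemma hnorm_ge0 x : 0 <= hnorm x.
Proof. apply sqrt_pos. Qed.

Lemma hnorm_sq x : hnorm x * hnorm x = nsq x.
Proof. apply sqrt_sqrt. apply nsq_ge0. Qed.

Lemma CS_sq x y : Re (hinner x y) * Re (hinner x y) <= nsq x * nsq y.
Proof.
  destruct (Req_dec (nsq y) 0) as [E|E].
  - apply nsq_eq0 in E. subst y. rewrite hinner0r. simpl. rewrite Rmult_0_l.
    apply Rmult_le_pos; apply nsq_ge0.
  - set (r := Re (hinner x y)). set (ny := nsq y).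
    assert (Hny : 0 < ny) by (pose proof (nsq_ge0 y); unfold ny; lra).
    pose proof (nsq_ge0 (hadd x (hscal (mkC (- r / ny) 0) y))) as P.
    rewrite nsq_add, nsq_scal in P. rewrite hinnerZr in P. simpl in P.
    fold r ny in P.
    assert (P2 : 0 <= nsq x - r * r / ny).
    { eapply Rle_trans; [exact P|]. right. field. lra. }
    apply Rmult_le_compat_r with (r := ny) in P2; [|lra].
    replace ((nsq x - r * r / ny) * ny) with (nsq x * ny - r * r) in P2 by (field; lra).
    lra.
Qed.

Lemma CS x y : Re (hinner x y) <= hnorm x * hnorm y.
Proof.
  destruct (Rle_dec (Re (hinner x y)) 0) as [N|N].
  - pose proof (Rmult_le_pos _ _ (hnorm_ge0 x) (hnorm_ge0 y)). lra.
  - assert (A : Re (hinner x y) * Re (hinner x y) <= (hnorm x * hnorm y) * (hnorm x * hnorm y)).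
    { replace ((hnorm x * hnorm y) * (hnorm x * hnorm y)) with ((hnorm x * hnorm x) * (hnorm y * hnorm y)) by ring.
      rewrite !hnorm_sq. apply CS_sq. }
    pose proof (hnorm_ge0 x); pose proof (hnorm_ge0 y).
    apply Rnot_le_lt in N.
    destruct (Rle_dec (Re (hinner x y)) (hnorm x * hnorm y)) as [|N2]; auto.
    apply Rnot_le_lt in N2.
    set (p := hnorm x * hnorm y) in *. set (r := Re (hinner x y)) in *.
    assert (0 <= p) by (apply Rmult_le_pos; auto).
    assert (p * p < r * r) by (apply Rmult_le_0_lt_compat; lra).
    lra.
Qed.

Lemma CS_abs x y : Rabs (Re (hinner x y)) <= hnorm x * hnorm y.
Proof.
  unfold Rabs. destruct (Rcase_abs _).
  - pose proof (CS (hopp x) y). rewrite hinnerNl in H0. simpl in H0.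
    unfold hnorm in *. unfold nsq in *.
    replace (hinner (hopp x) (hopp x)) with (hinner x x) in H0 by (hexp; cre; ring).
    lra.
  - apply CS.
Qed.



End CS.

Section Basic2.
Variable HS : Hilbert.
Implicit Types x y z u v g : HS.

Lemma CS_abs_Im x y : Rabs (Im (hinner x y)) <= hnorm x * hnorm y.
Proof.
  pose proof (CS_abs HS x (hscal Ci y)) as P. rewrite hinnerZr in P. simpl in P.
  replace (hnorm (hscal Ci y)) with (hnorm y) in P.
  - replace (0 * Re (hinner x y) - - (1) * Im (hinner x y)) with (Im (hinner x y)) in P by ring. exact P.
  - unfold hnorm. f_equal. fold (nsq (hscal Ci y)). rewrite nsq_scal. simpl. unfold nsq; ring.
Qed.

Lemma small_zero r K : 0 <= K -> (forall e, 0 < e -> Rabs r <= K * e) -> r = 0.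
Proof.
  intros HK Hs. destruct (Req_dec r 0) as [|N]; auto.
  assert (Hr : 0 < Rabs r) by (apply Rabs_pos_lt; auto).
  specialize (Hs (Rabs r / (2 * (K + 1)))).
  assert (He : 0 < Rabs r / (2 * (K + 1))) by (apply Rdiv_lt_0_compat; lra).
  specialize (Hs He).
  assert (K * (Rabs r / (2 * (K + 1))) < Rabs r).
  { assert (Eq : Rabs r / (2 * (K + 1)) * (2 * (K + 1)) = Rabs r) by (field; lra).
    set (q := Rabs r / (2 * (K + 1))) in *. nra. }
  lra.
Qed.

Lemma Cz_of_abs (z : C) K : 0 <= K -> (forall e, 0 < e -> Rabs (Re z) <= K * e /\ Rabs (Im z) <= K * e) -> z = C0.
Proof.
  intros HK Hs. apply Ceq; simpl.
  - apply (small_zero _ K HK). intros e He. apply (Hs e He).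
  - apply (small_zero _ K HK). intros e He. apply (Hs e He).
Qed.

Lemma hscal0 x : hscal C0 x = @h0 HS.
Proof. apply vec_ext_r. intro g. hexp. cre; ring. Qed.

Lemma hscal_h0 a : hscal a (@h0 HS) = @h0 HS.
Proof. apply vec_ext_r. intro g. hexp. cre; ring. Qed.

Lemma nsq_h0 : nsq (@h0 HS) = 0.
Proof. unfold nsq. rewrite hinner0l. reflexivity. Qed.

Lemma hnorm_h0 : hnorm (@h0 HS) = 0.
Proof. unfold hnorm. fold (nsq (@h0 HS)). rewrite nsq_h0. apply sqrt_0. Qed.

Lemma nsq_tri x y : nsq (hsub x y) <= (hnorm x + hnorm y) * (hnorm x + hnorm y).
Proof.
  rewrite nsq_sub. pose proof (CS_abs HS x y) as A1. pose proof (hnorm_sq HS x) as A2. pose proof (hnorm_sq HS y) as A3.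
  pose proof (Rle_abs (- Re (hinner x y))) as A4. rewrite Rabs_Ropp in A4. nra.
Qed.

Lemma nsq_tri_add x y : nsq (hadd x y) <= (hnorm x + hnorm y) * (hnorm x + hnorm y).
Proof.
  rewrite nsq_add. pose proof (CS_abs HS x y) as A1. pose proof (hnorm_sq HS x) as A2. pose proof (hnorm_sq HS y) as A3.
  pose proof (Rle_abs (Re (hinner x y))) as A4. nra.
Qed.

Lemma nsq_par x y : nsq (hadd x y) <= 2 * nsq x + 2 * nsq y.
Proof.
  pose proof (nsq_ge0 HS (hsub x y)) as A. rewrite nsq_sub in A. rewrite nsq_add. lra.
Qed.

Lemma sqrt_lt_sq a e : 0 <= a -> 0 < e -> a < e * e -> sqrt a < e.
Proof.
  intros Ha He Hlt. rewrite <- (sqrt_square e) by lra. apply sqrt_lt_1; nra.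
Qed.

Lemma sq_lt_of_sqrt a e : 0 <= a -> sqrt a < e -> a < e * e.
Proof.
  intros Ha Hs. pose proof (sqrt_pos a). rewrite <- (sqrt_sqrt a Ha). nra.
Qed.

End Basic2.

Lemma quad0 A r : 0 <= A -> (forall t, 0 <= t * t * A - 2 * t * r) -> r = 0.
Proof.
  intros HA Ht. specialize (Ht (r / (A + 1))).
  assert (E : r / (A + 1) * (A + 1) = r) by (field; lra).
  set (t := r / (A + 1)) in *.
  assert (E2 : t * t * A - 2 * t * r = - (t * t) * (A + 2)) by (rewrite <- E; ring).
  rewrite E2 in Ht.
  assert (t * t = 0) by nra.
  assert (t = 0) by nra. rewrite <- E, H0. ring.
Qed.

Lemma le_of_small a b K : 0 <= K -> (forall d, 0 < d < 1 -> a <= b + K * d) -> a <= b.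
Proof.
  intros HK Hs. destruct (Rle_dec a b) as [|N]; auto. apply Rnot_le_lt in N.
  set (d := Rmin (1/2) ((a - b) / (2 * (K + 1)))).
  assert (d1 : d <= 1/2) by apply Rmin_l.
  assert (d2 : d <= (a - b) / (2 * (K + 1))) by apply Rmin_r.
  assert (d3 : 0 < d).
  { unfold d. apply Rmin_glb_lt; [lra|]. apply Rdiv_lt_0_compat; lra. }
  specialize (Hs d ltac:(lra)).
  assert (E : (a - b) / (2 * (K + 1)) * (2 * (K + 1)) = a - b) by (field; lra).
  set (q := (a - b) / (2 * (K + 1))) in *.
  assert (K * d <= K * q) by (apply Rmult_le_compat_l; lra).
  nra.
Qed.

Lemma inv_small e : 0 < e -> exists N, forall n, (N <= n)%nat -> / (INR n + 1) < e.
Proof.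
  intro He. destruct (archimed_cor1 e He) as [N [HN HN0]]. exists N. intros n Hn.
  apply le_INR in Hn. apply lt_INR in HN0. simpl in HN0.
  eapply Rle_lt_trans; [|exact HN]. apply Rinv_le_contravar; lra.
Qed.

Section Proj.
Variable HS : Hilbert.
Implicit Types x y z u v g : HS.

Definition closed_set (M : HS -> Prop) :=
  forall (u : nat -> HS) l, (forall n, M (u n)) -> converges u l -> M l.
Definition csub (M : HS -> Prop) :=
  M h0 /\ (forall x y, M x -> M y -> M (hadd x y)) /\ (forall a x, M x -> M (hscal a x)).

Lemma paral x a b : nsq (hsub a b) =
  2 * nsq (hsub x a) + 2 * nsq (hsub x b) - 4 * nsq (hsub x (hscal (mkC (1/2) 0) (hadd a b))).
Proof. unfold nsq. hexp. simpl. swapf x a. swapf x b. swapf a b. lra. Qed.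

Lemma nsq_shift x l y t : nsq (hsub x (hadd l (hscal (mkC t 0) y))) =
  nsq (hsub x l) + t * t * nsq y - 2 * t * Re (hinner (hsub x l) y).
Proof.
  unfold nsq. hexp. simpl. swapf x l. swapf x y. swapf l y.
  rewrite (hinner_self_Im _ y). ring.
Qed.

Lemma proj_thm M : csub M -> closed_set M ->
  forall x, exists m, M m /\ forall y, M y -> hinner y (hsub x m) = C0.
Proof.
  intros [M0 [Madd Mscal]] Mcl x.
  set (E := fun r => exists m, M m /\ r = - nsq (hsub x m)).
  assert (Hb : bound E).
  { exists 0. intros r [m [_ ->]]. pose proof (nsq_ge0 _ (hsub x m)). lra. }
  assert (Hne : exists r, E r) by (exists (- nsq (hsub x h0)); exists h0; split; auto).
  destruct (completeness E Hb Hne) as [s [Hub Hlub]].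
  set (d := - s).
  assert (Hlow : forall m, M m -> d <= nsq (hsub x m)).
  { intros m Mm. assert (Em : E (- nsq (hsub x m))) by (exists m; auto). apply Hub in Em. unfold d; lra. }
  assert (Hd0 : 0 <= d).
  { assert (s <= 0).
    { apply Hlub. intros r [m [_ ->]]. pose proof (nsq_ge0 _ (hsub x m)). lra. }
    unfold d; lra. }
  assert (Happ : forall e, 0 < e -> exists m, M m /\ nsq (hsub x m) < d + e).
  { intros e He. apply NNPP. intro Hn.
    assert (s <= s - e).
    { apply Hlub. intros r [m [Mm ->]].
      destruct (Rlt_dec (nsq (hsub x m)) (d + e)) as [Hl|Hl].
      - exfalso. apply Hn. exists m; auto.
      - unfold d in Hl. lra. }
    lra. }
  assert (Hseq : forall n : nat, exists m, M m /\ nsq (hsub x m) < d + / (INR n + 1)).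
  { intro n. apply Happ. apply Rinv_0_lt_compat. pose proof (pos_INR n). lra. }
  destruct (choice _ Hseq) as [ms Hms].
  assert (Hpar : forall i j, nsq (hsub (ms i) (ms j)) <= 2 * / (INR i + 1) + 2 * / (INR j + 1)).
  { intros i j. rewrite (paral x).
    destruct (Hms i) as [Mi Li]. destruct (Hms j) as [Mj Lj].
    pose proof (Hlow _ (Mscal (mkC (1/2) 0) _ (Madd _ _ Mi Mj))). lra. }
  assert (Hcauchy : forall eps, 0 < eps -> exists N, forall m n, (N <= m)%nat -> (N <= n)%nat ->
        sqrt (Re (hinner (hadd (ms m) (hopp (ms n))) (hadd (ms m) (hopp (ms n))))) < eps).
  { intros eps He. destruct (inv_small (eps * eps / 4)) as [N HN].
    { apply Rdiv_lt_0_compat; [nra|lra]. }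
    exists N. intros m n Hm Hn. apply sqrt_lt_sq; auto; [apply nsq_ge0|].
    pose proof (HN m Hm). pose proof (HN n Hn). pose proof (Hpar m n). unfold hsub, nsq in *. lra. }
  destruct (hcomplete HS ms Hcauchy) as [l Hl].
  assert (Hconv : converges ms l) by exact Hl.
  assert (Ml : M l) by (apply (Mcl ms); auto; intro n; apply (Hms n)).
  exists l. split; auto.
  assert (Hmin : nsq (hsub x l) <= d).
  { apply (le_of_small _ _ (3 + 2 * (1 + d))); [lra|]. intros del Hdel.
    destruct (inv_small del ltac:(lra)) as [N1 HN1].
    destruct (Hconv del ltac:(lra)) as [N2 HN2].
    set (n := Nat.max N1 N2).
    specialize (HN1 n (Nat.le_max_l _ _)). specialize (HN2 n (Nat.le_max_r _ _)).
    destruct (Hms n) as [_ Ln].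
    assert (Ev : hsub x l = hadd (hsub x (ms n)) (hsub (ms n) l)).
    { apply vec_ext_r. intro g. hexp. cre; ring. }
    rewrite Ev. eapply Rle_trans; [apply nsq_tri_add|].
    pose proof (hnorm_sq _ (hsub x (ms n))) as Q. pose proof (hnorm_ge0 _ (hsub x (ms n))).
    pose proof (hnorm_ge0 _ (hsub (ms n) l)).
    set (a := hnorm (hsub x (ms n))) in *. set (b := hnorm (hsub (ms n) l)) in *.
    assert (a * a < d + del) by lra.
    assert (a <= 1 + d) by nra.
    nra. }
  intros y My.
  set (z := hsub x l) in *.
  assert (Hq : forall w, M w -> Re (hinner z w) = 0).
  { intros w Mw. apply (quad0 (nsq w)); [apply nsq_ge0|]. intro t.
    pose proof (Hlow _ (Madd _ _ Ml (Mscal (mkC t 0) _ Mw))) as P.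
    rewrite nsq_shift in P. fold z in P. lra. }
  pose proof (Hq y My) as R1. pose proof (Hq _ (Mscal Ci _ My)) as R2.
  rewrite hinnerZr in R2. simpl in R2.
  rewrite hinnerC. cre; lra.
Qed.

End Proj.

Section SubH.
Variable HS : Hilbert.
Variable P : HS -> Prop.
Hypothesis P0 : P h0.
Hypothesis Padd : forall x y, P x -> P y -> P (hadd x y).
Hypothesis Pscal : forall a x, P x -> P (hscal a x).
Hypothesis Pcl : forall (u : nat -> HS) l, (forall n, P (u n)) -> converges u l -> P l.

Lemma sig_eqP (x y : sig P) : proj1_sig x = proj1_sig y -> x = y.
Proof. destruct x as [x px], y as [y py]; simpl; intros ->. f_equal. apply proof_irrelevance. Qed.

Lemma Popp x : P x -> P (hopp x).
Proof.
  intro px. replace (hopp x) with (hscal (Copp C1) x); auto.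
  apply vec_ext_r; intro g; hexp; cre; ring.
Qed.

Definition sadd (x y : sig P) : sig P := exist _ (hadd (proj1_sig x) (proj1_sig y)) (Padd _ _ (proj2_sig x) (proj2_sig y)).
Definition sopp (x : sig P) : sig P := exist _ (hopp (proj1_sig x)) (Popp _ (proj2_sig x)).
Definition sscal a (x : sig P) : sig P := exist _ (hscal a (proj1_sig x)) (Pscal a _ (proj2_sig x)).
Definition s0 : sig P := exist _ h0 P0.
Definition sinner (x y : sig P) : C := hinner (proj1_sig x) (proj1_sig y).

Lemma s_complete : forall u : nat -> sig P,
    (forall eps, 0 < eps -> exists N, forall m n, (N <= m)%nat -> (N <= n)%nat ->
        sqrt (Re (sinner (sadd (u m) (sopp (u n))) (sadd (u m) (sopp (u n))))) < eps) ->
    exists l, forall eps, 0 < eps -> exists N, forall n, (N <= n)%nat ->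
        sqrt (Re (sinner (sadd (u n) (sopp l)) (sadd (u n) (sopp l)))) < eps.
Proof.
  intros u Hu. destruct (hcomplete HS (fun n => proj1_sig (u n)) Hu) as [l Hl].
  assert (pl : P l) by (apply (Pcl (fun n => proj1_sig (u n))); [intro n; apply proj2_sig|exact Hl]).
  exists (exist _ l pl). exact Hl.
Qed.

Definition subH : Hilbert.
Proof.
  refine (Build_Hilbert (sig P) s0 sadd sopp sscal sinner _ _ _ _ _ _ _ _ _ _ _ _ _ s_complete).
  - intros; apply sig_eqP; simpl; apply haddA.
  - intros; apply sig_eqP; simpl; apply haddC.
  - intros; apply sig_eqP; simpl; apply hadd0.
  - intros; apply sig_eqP; simpl; apply haddN.
  - intros; apply sig_eqP; simpl; apply hscalA.
  - intros; apply sig_eqP; simpl; apply hscal1.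
  - intros; apply sig_eqP; simpl; apply hscalDr.
  - intros; apply sig_eqP; simpl; apply hscalDl.
  - intros; unfold sinner; simpl; apply hinnerDl.
  - intros; unfold sinner; simpl; apply hinnerZl.
  - intros; unfold sinner; simpl; apply hinnerC.
  - intros; unfold sinner; simpl; apply hinner_ge0.
  - intros x E; apply sig_eqP; simpl; apply hinner_eq0; exact E.
Defined.

End SubH.

Section Op.
Variable HS : Hilbert.
Variable D : HS -> Prop.
Variable T : HS -> HS.
Variable Ds : HS -> Prop.
Variable Ts : HS -> HS.
Hypothesis HD : subspace D.
Hypothesis HT : linear_on D T.
Hypothesis Hdense : densely_defined D.
Hypothesis Hclosed : closed_op D T.
Hypothesis Hsym : symmetric D T.
Hypothesis Hadj : is_adjoint D T Ds Ts.
Implicit Types x y z g : HS.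

Definition Nsp (mu : C) (x : HS) := forall f, D f -> hinner (T f) x = hinner f (hscal mu x).

Lemma dense_zero z : (forall f, D f -> hinner f z = C0) -> z = h0.
Proof.
  intro Hz. apply nsq_eq0. apply (small_zero _ (hnorm z)); [apply hnorm_ge0|].
  intros e He. destruct (Hdense z e He) as [f [Df Hf]].
  assert (E : nsq z = Re (hinner (hsub z f) z)).
  { unfold nsq. hexp. rewrite (Hz f Df). simpl. ring. }
  rewrite E. eapply Rle_trans; [apply CS_abs|].
  rewrite Rmult_comm. apply Rmult_le_compat_l; [apply hnorm_ge0|lra].
Qed.

Lemma adj_of g h : (forall f, D f -> hinner (T f) g = hinner f h) -> Ds g /\ Ts g = h.
Proof.
  intro Hg. destruct Hadj as [A1 A2].
  assert (Dg : Ds g) by (apply A1; exists h; exact Hg).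
  split; auto. apply hsub_eq0. apply dense_zero. intros f Df.
  hexp. rewrite <- (A2 g f Dg Df), (Hg f Df). cre; ring.
Qed.

Lemma adj_use g f : Ds g -> D f -> hinner (T f) g = hinner f (Ts g).
Proof. intros; apply (proj2 Hadj); auto. Qed.

Lemma N_defect mu x : Nsp mu x <-> defect Ds Ts mu x.
Proof.
  split.
  - intro Hx. apply adj_of. exact Hx.
  - intros [Dx Tx] f Df. rewrite <- Tx. apply adj_use; auto.
Qed.

Lemma D_Ds f : D f -> Ds f /\ Ts f = T f.
Proof. intro Df. apply adj_of. intros g Dg. apply Hsym; auto. Qed.

Lemma D0 : D h0.
Proof. apply (proj1 HD). Qed.
Lemma Dadd x y : D x -> D y -> D (hadd x y).
Proof. apply (proj1 (proj2 HD)). Qed.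
Lemma Dscal a x : D x -> D (hscal a x).
Proof. apply (proj2 (proj2 HD)). Qed.

Lemma Nsp0 mu : Nsp mu h0.
Proof. intros f Df. rewrite hscal_h0, !hinner0r. reflexivity. Qed.

Lemma Nsp_add mu x y : Nsp mu x -> Nsp mu y -> Nsp mu (hadd x y).
Proof. intros Hx Hy f Df. hexp. rewrite (Hx f Df), (Hy f Df). hexp. cre; ring. Qed.

Lemma Nsp_scal mu a x : Nsp mu x -> Nsp mu (hscal a x).
Proof. intros Hx f Df. hexp. rewrite (Hx f Df). hexp. cre; ring. Qed.

Lemma Nsp_ext mu mu' x : mu = mu' -> Nsp mu x -> Nsp mu' x.
Proof. intros ->; auto. Qed.

Lemma TS_dec f0 h1 h2 mu1 mu2 : D f0 -> Nsp mu1 h1 -> Nsp mu2 h2 ->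
  Ds (hadd (hadd f0 h1) h2) /\
  Ts (hadd (hadd f0 h1) h2) = hadd (hadd (T f0) (hscal mu1 h1)) (hscal mu2 h2).
Proof.
  intros Df0 N1 N2. apply adj_of. intros f Df. hexp.
  rewrite (N1 f Df), (N2 f Df), (Hsym f f0 Df Df0). hexp. cre; ring.
Qed.

Lemma Nsp_closed mu (u : nat -> HS) x : (forall n, Nsp mu (u n)) -> converges u x -> Nsp mu x.
Proof.
  intros Hu Hc f Df.
  set (w := hsub (T f) (hscal (Cconj mu) f)).
  assert (Ew : forall v, hinner w v = Csub (hinner (T f) v) (hinner f (hscal mu v))).
  { intro v. unfold w. hexp. unfold Csub. cre; ring. }
  assert (Z : hinner w x = C0).
  { apply (Cz_of_abs _ (hnorm w)); [apply hnorm_ge0|]. intros e He.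
    destruct (Hc e He) as [N HN]. specialize (HN N (le_n N)).
    assert (E2 : hinner w x = Copp (hinner w (hsub (u N) x))).
    { assert (Z0 : hinner w (u N) = C0) by (rewrite Ew, (Hu N f Df); unfold Csub; cre; ring).
      hexp. rewrite Z0. cre; ring. }
    rewrite E2. simpl. rewrite !Rabs_Ropp.
    pose proof (hnorm_ge0 _ w).
    split; (eapply Rle_trans; [apply CS_abs || apply CS_abs_Im|]; apply Rmult_le_compat_l; lra). }
  rewrite Ew in Z. unfold Csub in Z. apply Csplit in Z. simpl in Z. destruct Z. cre; lra.
Qed.

Lemma lower_est g mu : D g -> Im mu * Im mu * nsq g <= nsq (hsub (T g) (hscal mu g)).
Proof.
  intro Dg. rewrite nsq_sub, nsq_scal. rewrite hinnerZr. simpl.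
  assert (I0 : Im (hinner (T g) g) = 0).
  { assert (E := Hsym g g Dg Dg). rewrite (hinnerC _ (T g) g) in E.
    apply Csplit in E. simpl in E. lra. }
  rewrite I0. pose proof (CS_sq _ (T g) g) as P.
  pose proof (nsq_ge0 _ g). pose proof (nsq_ge0 _ (T g)).
  set (s := Re (hinner (T g) g)) in *. set (n := nsq g) in *. set (A := nsq (T g)) in *.
  set (m := Re mu). set (k := Im mu).
  assert (0 <= A + m * m * n - 2 * m * s).
  { destruct (Req_dec n 0) as [E|E].
    - rewrite E in P. assert (s = 0) by nra. rewrite E, H1. nra.
    - assert (0 < n) by lra.
      assert (0 <= (A + m * m * n - 2 * m * s) * n).
      { assert (E2 : (A + m * m * n - 2 * m * s) * n = A * n - s * s + (s - m * n) * (s - m * n)) by ring.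
        rewrite E2. pose proof (Rle_0_sqr (s - m * n)). unfold Rsqr in *. lra. }
      apply (Rmult_le_reg_r n); nra. }
  nra.
Qed.


Lemma conv_nsq (u : nat -> HS) l : converges u l <->
  (forall e, 0 < e -> exists N, forall n, (N <= n)%nat -> nsq (hsub (u n) l) < e).
Proof.
  split.
  - intros Hc e He. destruct (Hc (sqrt e) (sqrt_lt_R0 _ He)) as [N HN]. exists N. intros n Hn.
    specialize (HN n Hn). apply sq_lt_of_sqrt in HN; [|apply nsq_ge0]. rewrite sqrt_sqrt in HN; unfold nsq; lra.
  - intros Hc e He. destruct (Hc (e * e) ltac:(nra)) as [N HN]. exists N. intros n Hn.
    apply sqrt_lt_sq; [apply nsq_ge0|exact He|apply HN; exact Hn].
Qed.

Lemma nsq_sub_sym x y : nsq (hsub x y) = nsq (hsub y x).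
Proof. rewrite !nsq_sub. swapf x y. ring. Qed.

Lemma hopp_scal x : hopp x = hscal (Copp C1) x.
Proof. apply vec_ext_r. intro g. hexp. cre; ring. Qed.

Lemma Dsub x y : D x -> D y -> D (hsub x y).
Proof. intros. unfold hsub. apply Dadd; auto. rewrite hopp_scal. apply Dscal; auto. Qed.

Lemma T0 : T h0 = h0.
Proof.
  pose proof (HT C0 C0 h0 h0 D0 D0) as E. rewrite !hscal0, hadd0 in E. exact E.
Qed.

Lemma T_sub x y : D x -> D y -> T (hsub x y) = hsub (T x) (T y).
Proof.
  intros Dx Dy.
  assert (E : hsub x y = hadd (hscal C1 x) (hscal (Copp C1) y)).
  { apply vec_ext_r; intro g; hexp; cre; ring. }
  rewrite E, HT by auto. apply vec_ext_r; intro g; hexp; cre; ring.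
Qed.

Lemma T_add x y : D x -> D y -> T (hadd x y) = hadd (T x) (T y).
Proof.
  intros Dx Dy. rewrite <- (hscal1 _ x), <- (hscal1 _ y), HT by auto. rewrite !hscal1. reflexivity.
Qed.

Lemma T_scal a x : D x -> T (hscal a x) = hscal a (T x).
Proof.
  intros Dx. pose proof (HT a C0 x h0 Dx D0) as E. rewrite !hscal0, !hadd0 in E. exact E.
Qed.

Definition Mr (mu : C) (y : HS) := exists f, D f /\ y = hsub (T f) (hscal mu f).

Lemma Mr_csub mu : csub HS (Mr mu).
Proof.
  split; [|split].
  - exists h0. split; [apply D0|]. rewrite T0, hscal_h0. unfold hsub. rewrite haddN. reflexivity.
  - intros x y [f [Df ->]] [g [Dg ->]]. exists (hadd f g). split; [apply Dadd; auto|].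
    rewrite T_add by auto. apply vec_ext_r; intro k; hexp; cre; ring.
  - intros a x [f [Df ->]]. exists (hscal a f). split; [apply Dscal; auto|].
    rewrite T_scal by auto. apply vec_ext_r; intro k; hexp; cre; ring.
Qed.

Lemma Mr_closed mu : Im mu <> 0 -> closed_set HS (Mr mu).
Proof.
  intros Hk u y Hu Hc.
  destruct (choice (fun n f => D f /\ u n = hsub (T f) (hscal mu f)) Hu) as [fs Hfs].
  set (k2 := Im mu * Im mu).
  assert (Hk2 : 0 < k2) by (unfold k2; nra).
  rewrite conv_nsq in Hc.
  assert (Hcau : forall eps, 0 < eps -> exists N, forall m n, (N <= m)%nat -> (N <= n)%nat ->
        sqrt (Re (hinner (hadd (fs m) (hopp (fs n))) (hadd (fs m) (hopp (fs n))))) < eps).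
  { intros eps He. destruct (Hc (k2 * (eps * eps) / 4)) as [N HN].
    { apply Rdiv_lt_0_compat; [|lra]. apply Rmult_lt_0_compat; nra. }
    exists N. intros m n Hm Hn. apply sqrt_lt_sq; [apply nsq_ge0|exact He|].
    destruct (Hfs m) as [Dm Em]. destruct (Hfs n) as [Dn En].
    pose proof (lower_est (hsub (fs m) (fs n)) mu (Dsub _ _ Dm Dn)) as L.
    assert (Ev : hsub (T (hsub (fs m) (fs n))) (hscal mu (hsub (fs m) (fs n))) =
                 hadd (hsub (u m) y) (hsub y (u n))).
    { rewrite T_sub by auto. rewrite Em, En. apply vec_ext_r; intro g; hexp; cre; ring. }
    rewrite Ev in L. pose proof (nsq_par _ (hsub (u m) y) (hsub y (u n))) as P.
    rewrite (nsq_sub_sym y) in P. pose proof (HN m Hm). pose proof (HN n Hn).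
    fold k2 in L. change (hadd (fs m) (hopp (fs n))) with (hsub (fs m) (fs n)).
    fold (nsq (hsub (fs m) (fs n))).
    assert (k2 * nsq (hsub (fs m) (fs n)) < k2 * (eps * eps)) by lra.
    apply Rmult_lt_reg_l in H1; auto. }
  destruct (hcomplete HS fs Hcau) as [f Hf].
  assert (Cf : converges fs f) by exact Hf.
  assert (CT : converges (fun n => T (fs n)) (hadd y (hscal mu f))).
  { apply conv_nsq. intros e He.
    set (m2 := Re mu * Re mu + Im mu * Im mu).
    assert (Hm2 : 0 <= m2) by (unfold m2; nra).
    destruct (Hc (e / 4) ltac:(lra)) as [N1 HN1].
    pose proof (proj1 (conv_nsq _ _) Cf) as Cf2. destruct (Cf2 (e / (4 * (m2 + 1)))) as [N2 HN2].
    { apply Rdiv_lt_0_compat; lra. }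
    exists (Nat.max N1 N2). intros n Hn.
    specialize (HN1 n ltac:(lia)). specialize (HN2 n ltac:(lia)).
    destruct (Hfs n) as [Dn En].
    assert (Ev : hsub (T (fs n)) (hadd y (hscal mu f)) = hadd (hsub (u n) y) (hscal mu (hsub (fs n) f))).
    { rewrite En. apply vec_ext_r; intro g; hexp; cre; ring. }
    rewrite Ev. eapply Rle_lt_trans; [apply nsq_par|]. rewrite nsq_scal. fold m2.
    assert (E4 : e / (4 * (m2 + 1)) * (4 * (m2 + 1)) = e) by (field; lra).
    set (q := e / (4 * (m2 + 1))) in *.
    pose proof (nsq_ge0 _ (hsub (fs n) f)).
    assert (m2 * nsq (hsub (fs n) f) <= m2 * q) by (apply Rmult_le_compat_l; lra).
    nra. }
  destruct (Hclosed fs f _ (fun n => proj1 (Hfs n)) Cf CT) as [Df Tf].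
  exists f. split; auto. rewrite Tf. apply vec_ext_r; intro g; hexp; cre; ring.
Qed.

Lemma VN mu f : 0 < Im mu -> Ds f ->
  exists g h1 h2, D g /\ Nsp mu h1 /\ Nsp (Cconj mu) h2 /\ f = hadd (hadd g h1) h2.
Proof.
  intros Hm Df.
  destruct (proj_thm HS (Mr mu) (Mr_csub mu) (Mr_closed mu ltac:(lra)) (hsub (Ts f) (hscal mu f)))
    as [m [[f0 [Df0 ->]] Hw]].
  remember (hsub (hsub (Ts f) (hscal mu f)) (hsub (T f0) (hscal mu f0))) as w eqn:Ew.
  assert (Nw : Nsp (Cconj mu) w).
  { intros g Dg. specialize (Hw (hsub (T g) (hscal mu g)) (ex_intro _ g (conj Dg eq_refl))).
    hexp. hexpH Hw. apply Csplit in Hw. simpl in Hw. destruct Hw. cre; lra. }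
  set (k := mkC 0 (/ (2 * Im mu))).
  remember (hscal k w) as h2 eqn:Eh2.
  exists f0, (hsub (hsub f f0) h2), h2.
  split; [auto|split; [|split]].
  - intros p Dp.
    assert (A1 : hinner (T p) f = hinner p (Ts f)) by (apply adj_use; auto).
    assert (A2 : hinner (T p) f0 = hinner p (T f0)) by (apply Hsym; auto).
    assert (A3 : hinner (T p) h2 = hinner p (hscal (Cconj mu) h2)) by (rewrite Eh2; apply Nsp_scal; auto).
    assert (B : hinner p h2 = Cmul (Cconj k) (Cadd (Cadd (hinner p (Ts f)) (Copp (Cmul (Cconj mu) (hinner p f))))
                   (Cadd (Copp (hinner p (T f0))) (Cmul (Cconj mu) (hinner p f0))))).
    { rewrite Eh2, Ew. hexp. cre; ring. }
    hexp. rewrite A1, A2, A3. hexp. rewrite B.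
    unfold k. cre; field; lra.
  - rewrite Eh2. apply Nsp_scal. auto.
  - apply vec_ext_r; intro g; hexp; cre; ring.
Qed.

Lemma Nsp_sub mu x y : Nsp mu x -> Nsp mu y -> Nsp mu (hsub x y).
Proof. intros. unfold hsub. apply Nsp_add; auto. rewrite hopp_scal. apply Nsp_scal; auto. Qed.

Lemma UNIQ g p m g' p' m' : D g -> D g' -> Nsp Ci p -> Nsp Ci p' ->
  Nsp (Copp Ci) m -> Nsp (Copp Ci) m' ->
  hadd (hadd g p) m = hadd (hadd g' p') m' -> p = p' /\ m = m'.
Proof.
  intros Dg Dg' Np Np' Nm Nm' E.
  set (G := hsub g g'). set (P := hsub p p'). set (M := hsub m m').
  assert (DG : D G) by (apply Dsub; auto).
  assert (NP : Nsp Ci P) by (apply Nsp_sub; auto).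
  assert (NM : Nsp (Copp Ci) M) by (apply Nsp_sub; auto).
  assert (E0 : hadd (hadd G P) M = h0).
  { apply vec_ext_r. intro q. assert (Eq := f_equal (hinner q) E). hexpH Eq.
    apply Csplit in Eq; simpl in Eq; destruct Eq. unfold G, P, M. hexp. cre; lra. }
  destruct (TS_dec G P M Ci (Copp Ci) DG NP NM) as [_ Et].
  rewrite E0, (proj2 (D_Ds h0 D0)), T0 in Et.
  assert (A1 := f_equal (fun v => hinner v M) E0). assert (A2 := f_equal (fun v => hinner v M) Et).
  assert (A3 := f_equal (fun v => hinner v P) E0). assert (A4 := f_equal (fun v => hinner v P) Et).
  assert (A5 := NM G DG). assert (A6 := NP G DG).
  simpl in A1, A2, A3, A4.
  hexpH A1. hexpH A2. hexpH A3. hexpH A4. hexpH A5. hexpH A6.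
  apply Csplit in A1; apply Csplit in A2; apply Csplit in A3; apply Csplit in A4;
  apply Csplit in A5; apply Csplit in A6. simpl in *.
  assert (ZM : nsq M = 0) by (unfold nsq; lra).
  assert (ZP : nsq P = 0) by (unfold nsq; lra).
  split; apply hsub_eq0; apply nsq_eq0; auto.
Qed.

Lemma GREEN f0 fp fm g0 gp gm : D f0 -> Nsp Ci fp -> Nsp (Copp Ci) fm ->
  D g0 -> Nsp Ci gp -> Nsp (Copp Ci) gm ->
  Csub (hinner (Ts (hadd (hadd f0 fp) fm)) (hadd (hadd g0 gp) gm))
       (hinner (hadd (hadd f0 fp) fm) (Ts (hadd (hadd g0 gp) gm))) =
  Cmul (mkC 0 2) (Csub (hinner fp gp) (hinner fm gm)).
Proof.
  intros Df0 Nfp Nfm Dg0 Ngp Ngm.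
  rewrite (proj2 (TS_dec f0 fp fm _ _ Df0 Nfp Nfm)), (proj2 (TS_dec g0 gp gm _ _ Dg0 Ngp Ngm)).
  hexp.
  rewrite (Hsym f0 g0 Df0 Dg0), (Ngp f0 Df0), (Ngm f0 Df0).
  rewrite (hinnerC _ (T g0) fp), (hinnerC _ (T g0) fm), (Nfp g0 Dg0), (Nfm g0 Dg0).
  hexp. unfold Csub. cre;
  swapf f0 gp; swapf f0 gm; swapf g0 fp; swapf g0 fm; swapf fp gp; swapf fp gm; swapf fm gp; swapf fm gm;
  swapf f0 g0; lra.
Qed.

Lemma Cmul_eq0 (a w : C) : a <> C0 -> Cmul a w = C0 -> w = C0.
Proof.
  intros Ha E. apply Csplit in E. simpl in E. destruct E as [E1 E2].
  assert (Hn : Re a * Re a + Im a * Im a <> 0).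
  { intro Z. apply Ha. apply Ceq; simpl; nra. }
  apply Ceq; simpl.
  - apply (Rmult_eq_reg_l (Re a * Re a + Im a * Im a)); auto.
    transitivity (Re a * (Re a * Re w - Im a * Im w) + Im a * (Re a * Im w + Im a * Re w)); [ring|].
    rewrite E1, E2. ring.
  - apply (Rmult_eq_reg_l (Re a * Re a + Im a * Im a)); auto.
    transitivity (Re a * (Re a * Im w + Im a * Re w) - Im a * (Re a * Re w - Im a * Im w)); [ring|].
    rewrite E1, E2. ring.
Qed.

Lemma key_formula l n mu x y g h : Nsp l x -> Nsp n y -> D g -> Nsp mu h -> x = hadd g h ->
  Cmul (Csub l (Cconj n)) (hinner x y) = Cmul (Csub mu (Cconj n)) (hinner h y).
Proof.
  intros Nx Ny Dg Nh Ex.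
  destruct (proj1 (N_defect l x) Nx) as [_ Tx].
  destruct (TS_dec g h h0 mu C0 Dg Nh (Nsp0 C0)) as [_ Et].
  rewrite hadd0, <- Ex, Tx, hscal_h0, hadd0 in Et.
  assert (Ea := f_equal (fun v => hinner v y) Et). simpl in Ea. hexpH Ea.
  rewrite (Ny g Dg) in Ea. hexpH Ea.
  assert (Ex2 : hinner x y = Cadd (hinner g y) (hinner h y)) by (rewrite Ex; hexp; reflexivity).
  transitivity (Csub (Cmul l (hinner x y)) (Cmul (Cconj n) (hinner x y))); [unfold Csub; cre; ring|].
  rewrite Ea. rewrite Ex2. unfold Csub. cre; ring.
Qed.

Lemma SAME_of_phillips : phillips D Ds Ts ->
  forall l mu, 0 < Im l -> 0 < Im mu -> forall x, Nsp l x ->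
  exists g h, D g /\ Nsp mu h /\ x = hadd g h.
Proof.
  intros [K [Gm [Gp [Th [Htrip [Hch Hconst]]]]]] l mu Hl Hmu x Nx.
  destruct (Hch l Hl) as [_ Hl']. destruct (Hch mu Hmu) as [_ Hm'].
  destruct (proj1 (Hl' x)) as [Dx Ex].
  { exists h0, x. split; [apply D0|split; [apply N_defect; auto|]].
    rewrite haddC, hadd0. reflexivity. }
  rewrite (Hconst l mu Hl Hmu) in Ex.
  destruct (proj2 (Hm' x) (conj Dx Ex)) as [g [h [Dg [dh Eh]]]].
  exists g, h. split; auto. split; auto. apply N_defect; auto.
Qed.

Lemma dir1 : phillips D Ds Ts ->
  forall l n, 0 < Im l -> Im n < 0 ->
  forall x y, defect Ds Ts l x -> defect Ds Ts n y -> hinner x y = C0.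
Proof.
  intros Hph.
  assert (StepB : forall l n, 0 < Im l -> Im n < 0 -> l <> Cconj n ->
                  forall x y, Nsp l x -> Nsp n y -> hinner x y = C0).
  { intros l n Hl Hn Hne x y Nx Ny.
    destruct (SAME_of_phillips Hph l (Cconj n) Hl ltac:(simpl; lra) x Nx) as [g [h [Dg [Nh Ex]]]].
    pose proof (key_formula l n (Cconj n) x y g h Nx Ny Dg Nh Ex) as KF.
    apply (Cmul_eq0 (Csub l (Cconj n))).
    - intro Z. apply Hne. apply Csplit in Z. simpl in Z. destruct Z. apply Ceq; simpl; lra.
    - rewrite KF. unfold Csub. cre; ring. }
  intros l n Hl Hn x y Dx Dy.
  apply N_defect in Dx. apply N_defect in Dy.
  destruct (classic (l = Cconj n)) as [Eln|Hne]; [|apply (StepB l n); auto].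
  set (s := Im l).
  set (b := hnorm x). set (c := hnorm y).
  assert (Hb : 0 <= b) by apply hnorm_ge0. assert (Hc : 0 <= c) by apply hnorm_ge0.
  apply (Cz_of_abs _ (2 * b * c / s)).
  { apply Rmult_le_pos; [nra|]. apply Rlt_le, Rinv_0_lt_compat. unfold s; lra. }
  intros e He.
  set (t := Rmin e (s / 4)).
  assert (Ht1 : 0 < t) by (apply Rmin_glb_lt; unfold s in *; lra).
  assert (Ht2 : t <= e) by apply Rmin_l.
  assert (Ht3 : t <= s / 4) by apply Rmin_r.
  set (mu := Cadd l (mkC 0 t)).
  destruct (SAME_of_phillips Hph l mu Hl ltac:(simpl; unfold s in *; lra) x Dx) as [g [h [Dg [Nh Ex]]]].
  assert (Hhy : hinner h y = C0).
  { apply (StepB mu n); auto. simpl; unfold s in *; lra.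
    intro Z. unfold mu in Z. apply Csplit in Z. simpl in Z. destruct Z as [_ Z2].
    assert (Im l = - Im n) by (rewrite Eln; reflexivity). lra. }
  assert (Exy : hinner x y = hinner g y) by (rewrite Ex; hexp; rewrite Hhy; cre; ring).
  destruct (proj1 (N_defect l x) Dx) as [_ Tx].
  destruct (TS_dec g h h0 mu C0 Dg Nh (Nsp0 C0)) as [_ Et].
  rewrite hadd0, <- Ex, Tx, hscal_h0, hadd0 in Et.
  assert (Ev : hsub (T g) (hscal l g) = hscal (mkC 0 (- t)) (hsub x g)).
  { apply vec_ext_r. intro q. assert (Eq := f_equal (hinner q) Et). hexpH Eq.
    assert (ETg : hinner q (T g) = Csub (Cmul (Cconj l) (hinner q x)) (Cmul (Cconj mu) (hinner q h))).
    { rewrite Eq. unfold Csub. cre; ring. }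
    hexp. rewrite ETg. rewrite Ex. hexp. unfold mu. unfold Csub. cre; ring. }
  pose proof (lower_est g l Dg) as L. rewrite Ev, nsq_scal in L. simpl in L.
  pose proof (nsq_tri _ x g) as Tr. fold b in Tr.
  set (a := hnorm g) in *. assert (Ha : 0 <= a) by apply hnorm_ge0.
  fold s in L. rewrite <- (hnorm_sq _ g) in L. fold a in L.
  assert (Hs : 0 < s) by (unfold s; lra).
  assert (Q : s * a <= t * (b + a)).
  { assert (Q2 : (s * a) * (s * a) <= (t * (b + a)) * (t * (b + a))) by nra.
    destruct (Rle_dec (s * a) (t * (b + a))) as [|N]; auto. apply Rnot_le_lt in N.
    assert (0 <= t * (b + a)) by nra. nra. }
  assert (Qa : a <= 2 * t * b / s).
  { apply (Rmult_le_reg_r s); auto. unfold Rdiv. rewrite Rmult_assoc, Rinv_l by lra. nra. }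
  assert (Qa2 : a * c <= (2 * b * c / s) * e).
  { unfold Rdiv in *. assert (0 <= / s) by (apply Rlt_le, Rinv_0_lt_compat; lra).
    assert (a * c <= (2 * t * b * / s) * c) by (apply Rmult_le_compat_r; auto).
    assert (2 * b * c * / s * t <= 2 * b * c * / s * e).
    { apply Rmult_le_compat_l; auto. repeat apply Rmult_le_pos; lra. }
    nra. }
  rewrite Exy. split.
  - eapply Rle_trans; [apply CS_abs|]. exact Qa2.
  - eapply Rle_trans; [apply CS_abs_Im|]. exact Qa2.
Qed.

Lemma CconjCi : Cconj Ci = Copp Ci.
Proof. cre; lra. Qed.

Lemma VNi f : Ds f -> exists g p m, D g /\ Nsp Ci p /\ Nsp (Copp Ci) m /\ f = hadd (hadd g p) m.
Proof.
  intro Df. destruct (VN Ci f ltac:(simpl; lra) Df) as [g [p [m [Dg [Np [Nm E]]]]]].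
  exists g, p, m. rewrite CconjCi in Nm. auto.
Qed.

Definition ORTHP := forall l n, 0 < Im l -> Im n < 0 -> forall x y, Nsp l x -> Nsp n y -> hinner x y = C0.

Lemma noM (Ho : ORTHP) l h g p m : 0 < Im l -> Nsp l h -> D g -> Nsp Ci p -> Nsp (Copp Ci) m ->
  h = hadd (hadd g p) m -> m = h0.
Proof.
  intros Hl Nh Dg Np Nm Eh.
  assert (Z : hinner h m = C0) by (apply (Ho l (Copp Ci)); auto; simpl; lra).
  destruct (proj1 (N_defect l h) Nh) as [_ Th].
  destruct (TS_dec g p m _ _ Dg Np Nm) as [_ Et]. rewrite <- Eh, Th in Et.
  assert (Ea := f_equal (fun v => hinner v m) Et). simpl in Ea. hexpH Ea. rewrite Z in Ea.
  rewrite (Nm g Dg) in Ea. hexpH Ea.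
  assert (Eb : hinner h m = Cadd (Cadd (hinner g m) (hinner p m)) (hinner m m)) by (rewrite Eh; hexp; reflexivity).
  rewrite Z in Eb.
  apply Csplit in Ea; apply Csplit in Eb. simpl in *.
  apply nsq_eq0. unfold nsq. lra.
Qed.

Lemma inDN (Ho : ORTHP) l p : 0 < Im l -> Nsp Ci p -> exists g h, D g /\ Nsp l h /\ p = hadd g h.
Proof.
  intros Hl Np.
  destruct (proj1 (N_defect Ci p) Np) as [Dp Tp].
  destruct (VN l p Hl Dp) as [g [h1 [h2 [Dg [N1 [N2 Ep]]]]]].
  assert (Z : hinner p h2 = C0) by (apply (Ho Ci (Cconj l)); auto; simpl; lra).
  destruct (TS_dec g h1 h2 _ _ Dg N1 N2) as [_ Et]. rewrite <- Ep, Tp in Et.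
  assert (Ea := f_equal (fun v => hinner v h2) Et). simpl in Ea. hexpH Ea. rewrite Z in Ea.
  rewrite (N2 g Dg) in Ea. hexpH Ea.
  assert (Eb : hinner p h2 = Cadd (Cadd (hinner g h2) (hinner h1 h2)) (hinner h2 h2)) by (rewrite Ep; hexp; reflexivity).
  rewrite Z in Eb.
  assert (E3 : Cmul (mkC 0 (2 * Im l)) (hinner h2 h2) = C0).
  { transitivity (Csub (Cmul l (Cadd (Cadd (hinner g h2) (hinner h1 h2)) (hinner h2 h2)))
       (Cadd (Cadd (Cmul (Cconj (Cconj l)) (hinner g h2)) (Cmul l (hinner h1 h2))) (Cmul (Cconj l) (hinner h2 h2)))).
    - unfold Csub. cre; ring.
    - rewrite <- Eb. rewrite <- Ea. unfold Csub. cre; ring. }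
  apply Cmul_eq0 in E3; [|intro W; apply Csplit in W; simpl in W; lra].
  apply hinner_eq0 in E3. subst h2.
  exists g, h1. split; auto. split; auto. rewrite Ep, hadd0. reflexivity.
Qed.

Lemma dir2 : equal_nonzero_defect Ds Ts -> ORTHP -> phillips D Ds Ts.
Proof.
  intros [[U [UA [Usurj [Ulin Uiso]]]] _] Ho.
  assert (UN : forall x, Nsp Ci x -> Nsp (Copp Ci) (U x)).
  { intros x Nx. apply N_defect. apply UA. apply N_defect. auto. }
  assert (Ulin' : forall a b x y, Nsp Ci x -> Nsp Ci y ->
            U (hadd (hscal a x) (hscal b y)) = hadd (hscal a (U x)) (hscal b (U y))).
  { intros a b x y Nx Ny. apply Ulin; apply N_defect; auto. }
  assert (Uiso' : forall x y, Nsp Ci x -> Nsp Ci y -> hinner (U x) (U y) = hinner x y).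
  { intros x y Nx Ny. apply Uiso; apply N_defect; auto. }
  assert (Usurj' : forall y, Nsp (Copp Ci) y -> exists x, Nsp Ci x /\ U x = y).
  { intros y Ny. destruct (Usurj y (proj1 (N_defect _ _) Ny)) as [x [Ax Ex]].
    exists x. split; auto. apply N_defect; auto. }
  assert (Hdec : forall f, exists t : HS * HS * HS, Nsp Ci (snd (fst t)) /\ Nsp (Copp Ci) (snd t) /\
            (Ds f -> D (fst (fst t)) /\ f = hadd (hadd (fst (fst t)) (snd (fst t))) (snd t))).
  { intro f. destruct (classic (Ds f)) as [Df|nDf].
    - destruct (VNi f Df) as [g [p [m [Dg [Np [Nm E]]]]]]. exists (g, p, m). simpl. auto.
    - exists (h0, h0, h0). simpl. split; [apply Nsp0|split; [apply Nsp0|]]. intro; contradiction. }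
  destruct (choice _ Hdec) as [dec Hd].
  set (d0 := fun f => fst (fst (dec f))). set (dp := fun f => snd (fst (dec f))).
  set (dm := fun f => snd (dec f)).
  assert (Hdp : forall f, Nsp Ci (dp f)) by (intro f; apply (Hd f)).
  assert (Hdm : forall f, Nsp (Copp Ci) (dm f)) by (intro f; apply (Hd f)).
  assert (Hd0 : forall f, Ds f -> D (d0 f) /\ f = hadd (hadd (d0 f) (dp f)) (dm f)) by (intro f; apply (Hd f)).
  assert (Spec : forall f g p m, D g -> Nsp Ci p -> Nsp (Copp Ci) m -> f = hadd (hadd g p) m ->
            dp f = p /\ dm f = m).
  { intros f g p m Dg Np Nm Ef.
    assert (Df : Ds f) by (rewrite Ef; apply (TS_dec g p m _ _ Dg Np Nm)).
    destruct (Hd0 f Df) as [D0f E0f].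
    apply (UNIQ (d0 f) (dp f) (dm f) g p m); auto. rewrite <- E0f. exact Ef. }
  set (K := subH HS (Nsp (Copp Ci)) (Nsp0 _) (Nsp_add _) (fun a x => Nsp_scal _ a x) (Nsp_closed _)).
  set (c := mkC (sqrt 2) 0).
  set (ci := mkC (/ sqrt 2) 0).
  assert (Hs2 : 0 < sqrt 2) by (apply sqrt_lt_R0; lra).
  assert (Hcci : Cmul c ci = C1) by (unfold c, ci; cre; field; lra).
  assert (Hcic : Cmul ci c = C1) by (unfold c, ci; cre; field; lra).
  assert (Hcc : forall x y, hinner (hscal c x) (hscal c y) = Cmul (mkC 2 0) (hinner x y)).
  { intros x y. hexp. unfold c. pose proof (sqrt_sqrt 2 ltac:(lra)) as S2. cre; rewrite ?Rmult_assoc.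
    all: rewrite <- ?Rmult_assoc, ?S2; ring_simplify; rewrite ?S2; try ring.
    all: replace (sqrt 2 ^ 2) with 2 by (simpl; rewrite Rmult_1_r, S2; reflexivity); ring. }
  pose (Gm := fun f => (exist _ (hscal c (dm f)) (Nsp_scal _ c _ (Hdm f)) : hcar K)).
  pose (Gp := fun f => (exist _ (hscal c (U (dp f))) (Nsp_scal _ c _ (UN _ (Hdp f))) : hcar K)).
  exists K, Gm, Gp, (fun _ _ => @h0 K).
  split; [|split].
  -
    split; [|split; [|split]].
    + intros a b x y Dx Dy. apply sig_eqP. simpl.
      destruct (Hd0 x Dx) as [D0x Ex]. destruct (Hd0 y Dy) as [D0y Ey].
      destruct (Spec (hadd (hscal a x) (hscal b y)) (hadd (hscal a (d0 x)) (hscal b (d0 y)))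
                   (hadd (hscal a (dp x)) (hscal b (dp y))) (hadd (hscal a (dm x)) (hscal b (dm y))))
        as [_ Em].
      * apply Dadd; apply Dscal; auto.
      * apply Nsp_add; apply Nsp_scal; auto.
      * apply Nsp_add; apply Nsp_scal; auto.
      * apply vec_ext_r. intro q. assert (Qx := f_equal (hinner q) Ex). assert (Qy := f_equal (hinner q) Ey).
        hexpH Qx. hexpH Qy. hexp. rewrite Qx, Qy. cre; ring.
      * rewrite Em. apply vec_ext_r; intro q; hexp; cre; ring.
    + intros a b x y Dx Dy. apply sig_eqP. simpl.
      destruct (Hd0 x Dx) as [D0x Ex]. destruct (Hd0 y Dy) as [D0y Ey].
      destruct (Spec (hadd (hscal a x) (hscal b y)) (hadd (hscal a (d0 x)) (hscal b (d0 y)))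
                   (hadd (hscal a (dp x)) (hscal b (dp y))) (hadd (hscal a (dm x)) (hscal b (dm y))))
        as [Ep _].
      * apply Dadd; apply Dscal; auto.
      * apply Nsp_add; apply Nsp_scal; auto.
      * apply Nsp_add; apply Nsp_scal; auto.
      * apply vec_ext_r. intro q. assert (Qx := f_equal (hinner q) Ex). assert (Qy := f_equal (hinner q) Ey).
        hexpH Qx. hexpH Qy. hexp. rewrite Qx, Qy. cre; ring.
      * rewrite Ep, Ulin' by auto. apply vec_ext_r; intro q; hexp; cre; ring.
    + intros f g Df Dg.
      destruct (Hd0 f Df) as [D0f Ef]. destruct (Hd0 g Dg) as [D0g Eg].
      pose proof (GREEN (d0 f) (dp f) (dm f) (d0 g) (dp g) (dm g) D0f (Hdp f) (Hdm f) D0g (Hdp g) (Hdm g)) as G.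
      rewrite <- Ef, <- Eg in G. rewrite G.
      simpl. unfold sinner. simpl. rewrite !Hcc, Uiso' by auto. unfold Csub. cre; ring.
    + intros [a Pa] [b Pb].
      destruct (Usurj' (hscal ci b) (Nsp_scal _ _ _ Pb)) as [x [Nx Ux]].
      set (f := hadd (hadd h0 x) (hscal ci a)).
      assert (Na : Nsp (Copp Ci) (hscal ci a)) by (apply Nsp_scal; auto).
      destruct (Spec f h0 x (hscal ci a) D0 Nx Na eq_refl) as [Ep Em].
      exists f. split; [apply (TS_dec h0 x (hscal ci a) _ _ D0 Nx Na)|split].
      * apply sig_eqP. simpl. rewrite Em, hscalA, Hcci, hscal1. reflexivity.
      * apply sig_eqP. simpl. rewrite Ep, Ux, hscalA, Hcci, hscal1. reflexivity.
  -
    intros l Hl. split.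
    + split.
      * intros a b x y _ _. apply sig_eqP. simpl. rewrite !hscal_h0, hadd0. reflexivity.
      * exists 0. intro x. simpl. unfold hnorm, sinner. simpl. cbv [sinner s0 proj1_sig]. rewrite hinner0l. simpl.
        rewrite sqrt_0. lra.
    + intro f. split.
      * intros [g [h [Dg [dh Ef]]]]. apply N_defect in dh.
        destruct (proj1 (N_defect l h) dh) as [Dh _].
        destruct (VNi h Dh) as [hg [hp [hm [Dhg [Nhp [Nhm Eh]]]]]].
        pose proof (noM Ho l h hg hp hm Hl dh Dhg Nhp Nhm Eh) as Z. subst hm.
        assert (Ef2 : f = hadd (hadd (hadd g hg) hp) h0).
        { rewrite Ef, Eh. apply vec_ext_r; intro q; hexp; cre; ring. }
        destruct (Spec f (hadd g hg) hp h0 (Dadd _ _ Dg Dhg) Nhp (Nsp0 _) Ef2) as [_ Em].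
        split.
        -- rewrite Ef2. apply (TS_dec _ _ _ _ _ (Dadd _ _ Dg Dhg) Nhp (Nsp0 (Copp Ci))).
        -- apply sig_eqP. simpl. rewrite Em, hscal_h0. reflexivity.
      * intros [Df Ez]. apply (f_equal (@proj1_sig _ _)) in Ez. simpl in Ez.
        assert (Zm : dm f = h0).
        { rewrite <- (hscal1 _ (dm f)), <- Hcic, <- hscalA, <- Ez, hscal_h0. reflexivity. }
        destruct (Hd0 f Df) as [D0f Ef].
        destruct (inDN Ho l (dp f) Hl (Hdp f)) as [g' [h' [Dg' [Nh' Ep]]]].
        exists (hadd (d0 f) g'), h'. split; [apply Dadd; auto|split; [apply N_defect; auto|]].
        rewrite Ef at 1. rewrite Zm, Ep. apply vec_ext_r; intro q; hexp; cre; ring.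
  - intros; reflexivity.
Qed.

End Op.

Theorem theorem3p4 (H : Hilbert) (D : H -> Prop) (T : H -> H)
  (Ds : H -> Prop) (Ts : H -> H) :
  separable H ->
  subspace D -> linear_on D T ->
  densely_defined D -> closed_op D T -> symmetric D T ->
  is_adjoint D T Ds Ts ->
  equal_nonzero_defect Ds Ts ->
  (phillips D Ds Ts <->
   forall l n, 0 < Im l -> Im n < 0 ->
     forall x y, defect Ds Ts l x -> defect Ds Ts n y -> hinner x y = C0).
Proof.
  intros _ HD HT Hdense Hclosed Hsym Hadj Hdef. split.
  - intro Hph. exact (dir1 H D T Ds Ts HD Hdense Hsym Hadj Hph).
  - intro Ho. apply (dir2 H D T Ds Ts HD HT Hdense Hclosed Hsym Hadj Hdef).
    intros l n Hl Hn x y Nx Ny. apply (Ho l n Hl Hn x y).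
    + apply (N_defect H D T Ds Ts Hdense Hadj); exact Nx.
    + apply (N_defect H D T Ds Ts Hdense Hadj); exact Ny.
Qed.
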